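(* Let $G$ be a strongly connected directed multigraph with a designated set of ordinary vertices such that every two distinct ordinary vertices are $(k+1)$-edge-connected, and let $s$ be a fixed ordinary vertex. Let $u$ and $w$ be two ordinary vertices that are not $(k+2)$-edge-connected. Then either $M(u)\neq M(w)$, or $M_R(u)\neq M_R(w)$.
   Context: For a vertex set $S$, $\mathit{out}(S)$ is the number of edges leaving $S$; $S$ is a $j$-out set if $\mathit{out}(S)=j$. For vertices $x,y$, $\lambda(x,y)$ is the minimum of $\mathit{out}(S)$ over vertex sets $S$ with $x\in S$, $y\notin S$. Two vertices $x,y$ are $j$-edge-connected if $\lambda(x,y)\ge j$ and $\lambda(y,x)\ge j$. For a vertex $v$ with $\lambda(v,s)\ge k+1$: if there is a $(k+1)$-out set $S$ with $v\in S$, $s\notin S$, then $M(v)$ denotes the inclusion-wise minimum such $(k+1)$-out set (it exists); otherwise $M(v)=\bot$. $M_R(v)$ denotes the same notion defined in the reverse graph $G^R$ (all edges reversed). *)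

(* Defs.v *)
From mathcomp Require Import all_boot.
Set Implicit Arguments. Unset Strict Implicit. Unset Printing Implicit Defensive.

(* A directed multigraph on a finite vertex type V is given by its edge
   multiplicity function: [g x y] = number of parallel edges x -> y. *)
Definition mgraph (V : finType) := V -> V -> nat.

Definition rev_graph (V : finType) (g : mgraph V) : mgraph V := fun x y => g y x.

Definition out (V : finType) (g : mgraph V) (S : {set V}) : nat :=
  \sum_(x in S) \sum_(y in ~: S) g x y.

Definition strongly_connected (V : finType) (g : mgraph V) : Prop :=
  forall x y : V, connect (fun a b => 0 < g a b) x y.

Definition lambda_ge (V : finType) (g : mgraph V) (x y : V) (j : nat) : Prop :=
  forall S : {set V}, x \in S -> y \notin S -> j <= out g S.

Definition edge_conn (V : finType) (g : mgraph V) (j : nat) (x y : V) : Prop :=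
  lambda_ge g x y j /\ lambda_ge g y x j.

Definition sep_out (V : finType) (g : mgraph V) (k : nat) (s v : V)
  (S : {set V}) : bool :=
  [&& v \in S, s \notin S & out g S == k.+1].

(* M(v): the inclusion-wise minimum (k+1)-out set containing v and not s,
   or None (= bottom) if there is none. *)
Definition Mset (V : finType) (g : mgraph V) (k : nat) (s v : V)
  : option {set V} :=
  [pick S : {set V} | sep_out g k s v S &&
     [forall T : {set V}, sep_out g k s v T ==> (S \subset T)]].

Definition MRset (V : finType) (g : mgraph V) (k : nat) (s v : V)
  : option {set V} := Mset (rev_graph g) k s v.

(* Main.v *)
Require Import Defs.
From mathcomp Require Import all_boot.
From mathcomp Require Import zify.
Set Implicit Arguments. Unset Strict Implicit.

Section Aux.
Variable V : finType.
Implicit Types (g : mgraph V) (A B S T : {set V}).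

Lemma outE g S : out g S = \sum_x \sum_y ((x \in S) && (y \notin S)) * g x y.
Proof.
rewrite /out big_mkcond /=; apply: eq_bigr => x _.
case: (x \in S) => /=.
  rewrite big_mkcond /=; apply: eq_bigr => y _; rewrite in_setC.
  by case: (y \in S) => //=; rewrite mul1n.
by rewrite big1 // => y _; rewrite mul0n.
Qed.

Lemma out_submod g A B :
  out g (A :&: B) + out g (A :|: B) <= out g A + out g B.
Proof.
rewrite !outE -!big_split /=; apply: leq_sum => x _.
rewrite -!big_split /=; apply: leq_sum => y _.
rewrite !inE.
case: (x \in A); case: (x \in B); case: (y \in A); case: (y \in B) => /=; lia.
Qed.

Lemma out_rev g S : out (rev_graph g) S = out g (~: S).
Proof.
rewrite /out /rev_graph exchange_big /=.
by apply: eq_bigr => x _; rewrite setCK.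
Qed.

Lemma edge_conn_rev g j x y : edge_conn g j x y -> edge_conn (rev_graph g) j x y.
Proof.
move=> [h1 h2]; split => S hx hy; rewrite out_rev.
  by apply: h2; rewrite inE ?hy ?hx.
by apply: h1; rewrite inE ?hy ?hx.
Qed.

Lemma not_lambda g x y j : ~ lambda_ge g x y j ->
  exists S, [/\ x \in S, y \notin S & out g S < j].
Proof.
move=> h.
case: (boolP [exists S : {set V}, [&& x \in S, y \notin S & out g S < j]]).
  by move/existsP=> [S /and3P [a b c]]; exists S.
move=> /negP hn; exfalso; apply: h => S hx hy.
rewrite leqNgt; apply/negP => hlt; apply: hn.
by apply/existsP; exists S; rewrite hx hy hlt.
Qed.

Lemma sep_capI g k s v (ord : {set V}) :
  (forall x y, x \in ord -> y \in ord -> x != y -> edge_conn g k.+1 x y) ->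
  s \in ord -> v \in ord -> forall A B,
  sep_out g k s v A -> sep_out g k s v B -> sep_out g k s v (A :&: B).
Proof.
move=> hc hs hv A B /and3P [vA sA /eqP oA] /and3P [vB sB /eqP oB].
have vs : v != s by apply/eqP => e; move: sA; rewrite -e vA.
have [l _] := hc _ _ hv hs vs.
have h1 := l (A :&: B); have h2 := l (A :|: B).
have := out_submod g A B.
rewrite !inE in h1 h2.
rewrite vA vB /= in h1 h2.
have {}h1 := h1 isT; have {}h2 := h2 isT.
rewrite (negbTE sA) (negbTE sB) /= in h1 h2.
have {}h1 := h1 isT; have {}h2 := h2 isT.
move=> hsub.
apply/and3P; split; first by rewrite inE vA vB.
  by rewrite inE (negbTE sA).
apply/eqP; lia.
Qed.

Lemma Mset_ex g k s v (ord : {set V}) S :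
  (forall x y, x \in ord -> y \in ord -> x != y -> edge_conn g k.+1 x y) ->
  s \in ord -> v \in ord -> sep_out g k s v S ->
  exists A, [/\ Mset g k s v = Some A, sep_out g k s v A &
     forall T, sep_out g k s v T -> A \subset T].
Proof.
move=> hc hs hv hS.
rewrite /Mset; case: pickP.
  move=> A /andP [hA /forallP hall]; exists A; split => // T hT.
  by have := hall T; rewrite hT.
move=> hnone; exfalso.
case: (arg_minnP (fun S => #|S|) hS) => A hA hmin.
have := hnone A; rewrite hA /=; move/negP; apply.
apply/forallP => T; apply/implyP => hT.
have hI := sep_capI hc hs hv hA hT.
have := hmin _ hI.
have sub : A :&: T \subset A by apply: subsetIl.
move=> hle.
have e : A :&: T = A.
  by apply/eqP; rewrite eqEcard sub hle.
by rewrite -e subsetIr.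
Qed.

Lemma key g k s u w (ord : {set V}) S :
  (forall x y, x \in ord -> y \in ord -> x != y -> edge_conn g k.+1 x y) ->
  s \in ord -> u \in ord ->
  u \in S -> w \notin S -> s \notin S -> out g S = k.+1 ->
  Mset g k s u <> Mset g k s w.
Proof.
move=> hc hs hu uS wS sS oS.
have hsep : sep_out g k s u S by rewrite /sep_out uS sS oS eqxx.
have [A [eA hA hminA]] := Mset_ex hc hs hu hsep.
rewrite eA /Mset => e.
move: (esym e); case: pickP => // B /andP [hB _] [eB].
rewrite eB in hB; move: hB => /and3P [wA _ _].
have := hminA _ hsep => /subsetP /(_ _ wA); by rewrite (negbTE wS).
Qed.

Lemma key2 g k s a b (ord : {set V}) S :
  (forall x y, x \in ord -> y \in ord -> x != y -> edge_conn g k.+1 x y) ->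
  s \in ord -> a \in ord -> b \in ord ->
  a \in S -> b \notin S -> out g S = k.+1 ->
  Mset g k s a <> Mset g k s b \/ MRset g k s a <> MRset g k s b.
Proof.
move=> hc hs ha hb aS bS oS.
case: (boolP (s \in S)) => sS.
  right; rewrite /MRset => e.
  have hcR : forall x y, x \in ord -> y \in ord -> x != y ->
      edge_conn (rev_graph g) k.+1 x y.
    by move=> x y hx hy hxy; apply: edge_conn_rev; apply: hc.
  apply: (@key (rev_graph g) k s b a ord (~: S) hcR hs hb).
  - by rewrite inE.
  - by rewrite inE aS.
  - by rewrite inE sS.
  - by rewrite out_rev setCK.
  - by rewrite e.
left; exact: (key hc hs ha aS bS sS oS).
Qed.

End Aux.

Theorem mainTheorem3 (V : finType) (g : mgraph V) (ord : {set V}) (k : nat)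
  (s u w : V) :
  strongly_connected g ->
  (forall x y, x \in ord -> y \in ord -> x != y -> edge_conn g k.+1 x y) ->
  s \in ord -> u \in ord -> w \in ord ->
  ~ edge_conn g k.+2 u w ->
  Mset g k s u <> Mset g k s w \/ MRset g k s u <> MRset g k s w.
Proof.
move=> _ hc hs hu hw hn.
have uw : u != w.
  apply/eqP => e; apply: hn; rewrite e.
  by split => S h1 h2; rewrite h1 in h2.
have [l1 l2] := hc _ _ hu hw uw.
have [h1 | h2] : ~ lambda_ge g u w k.+2 \/ ~ lambda_ge g w u k.+2.
  case: (boolP [forall S : {set V}, (u \in S) ==> (w \notin S) ==> (k.+2 <= out g S)]).
    move/forallP => H; right => h2; apply: hn; split => // S a b.
    by have := H S; rewrite a b.
  move=> /forallP H; left => h; apply: H => S.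
  by apply/implyP => a; apply/implyP => b; apply: h.
- have [S [a b c]] := not_lambda h1.
  have := l1 S a b => d.
  by apply: (key2 hc hs hu hw a b); apply/eqP; rewrite eqn_leq d -ltnS c.
- have [S [a b c]] := not_lambda h2.
  have := l2 S a b => d.
  have oS : out g S = k.+1 by apply/eqP; rewrite eqn_leq d -ltnS c.
  case: (key2 hc hs hw hu a b oS) => e; [left|right] => e'; apply: e; by rewrite e'.
Qed.
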